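(* Let $d_1\ge1$, $d_2\ge2$, and for $y_1\in\mathbb{R}$ let $\Phi_{y_1}$ denote the solution map $(u_0,u_1)\mapsto(u(\cdot,y_1,\cdot),\partial_{y_1}u(\cdot,y_1,\cdot))$ of the Cauchy problem $\partial_{y_1}^2u=\Delta_xu-\Delta_{y'}u$, $u|_{y_1=0}=u_0$, $\partial_{y_1}u|_{y_1=0}=u_1$, given on the Fourier side (see context). Let $\Phi^S_{y_1}$ be its restriction to $X^S$ for $y_1\ge0$, $\Phi^U_{y_1}$ its restriction to $X^U$ for $y_1\le0$, and $\Phi^C_{y_1}$ its restriction to $X^C$. Then for all $u,v\in X^S$ and $y_1\ge0$, $$\|\Phi^S_{y_1}(u)-\Phi^S_{y_1}(v)\|_X^2\le\|u-v\|_X^2,$$ and for all $u,v\in X^U$ and $y_1\le0$, $$\|\Phi^U_{y_1}(u)-\Phi^U_{y_1}(v)\|_X^2\le\|u-v\|_X^2.$$ For $u\in X^C$, $\Phi^C_{y_1}=\Phi^S_{y_1}$ for $y_1\ge0$ and $\Phi^C_{y_1}=\Phi^U_{y_1}$ for $y_1\le0$, and equality holds in both estimates.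
   Context: Coordinates $(x,y_1,y')\in\mathbb{R}^{d_1}\times\mathbb{R}\times\mathbb{R}^{d_2-1}$; Fourier transform in $(x,y')$ with dual variables $(\xi,\eta')$. $\omega=\sqrt{|\xi|^2-|\eta'|^2}$ on $\{|\eta'|\le|\xi|\}$, $\lambda=\sqrt{|\eta'|^2-|\xi|^2}$ on $\{|\xi|\le|\eta'|\}$. The solution map acts on the Fourier side by the matrix $\begin{pmatrix}\cos(\omega y_1)&\sin(\omega y_1)/\omega\\-\omega\sin(\omega y_1)&\cos(\omega y_1)\end{pmatrix}$ on $\{|\eta'|\le|\xi|\}$ and $\begin{pmatrix}\cosh(\lambda y_1)&\sinh(\lambda y_1)/\lambda\\ \lambda\sinh(\lambda y_1)&\cosh(\lambda y_1)\end{pmatrix}$ on $\{|\xi|<|\eta'|\}$. The space $X$ consists of pairs $v=(v_0,v_1)$ with $\|v\|_X^2=\iint_{\{|\eta'|<|\xi|\}}\omega^2|\hat v_0|^2+\iint_{\{|\xi|\le|\eta'|\}}\lambda^2|\hat v_0|^2+\iint|\hat v_1|^2<\infty$. $X^S=\{v\in X:\hat v_0+\hat v_1/\lambda=0\text{ for }|\xi|<|\eta'|\}$, $X^U=\{v\in X:\hat v_0-\hat v_1/\lambda=0\text{ for }|\xi|<|\eta'|\}$, $X^C=\{v\in X:\mathrm{supp}(\hat v_0,\hat v_1)\subseteq\{|\xi|\ge|\eta'|\}\}=X^S\cap X^U$. *)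

(* Defs.v *)
From HB Require Import structures.
From mathcomp Require Import all_boot all_order all_algebra.
From mathcomp Require Import all_classical all_reals all_analysis.
From mathcomp Require Import complex.
Set Implicit Arguments. Unset Strict Implicit. Unset Printing Implicit Defensive.
Import Order.TTheory GRing.Theory Num.Theory.
Local Open Scope ring_scope.

Section Defs.
Variable R : realType.

(* Lebesgue integral of a [0,+oo]-valued function on R^n = n.-tuple R, written as
   the iterated one-dimensional Lebesgue integral (Tonelli). *)
Fixpoint intRn (n : nat) : (n.-tuple R -> \bar R) -> \bar R :=
  match n return (n.-tuple R -> \bar R) -> \bar R with
  | 0 => fun f => f [tuple]
  | n'.+1 => fun f =>
      (\int[@lebesgue_measure R]_(t in [set: R])
         intRn (fun v : n'.-tuple R => f [tuple of t :: v]))%E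
  end.

Definition enorm (n : nat) (v : n.-tuple R) : R := Num.sqrt (\sum_(i < n) tnth v i ^+ 2).

(* Frequency space: (xi, eta') in R^d1 x R^(d2-1) *)
Definition freq (d1 d2 : nat) := (d1.-tuple R * (d2.-1).-tuple R)%type.

Definition intF (d1 d2 : nat) (f : freq d1 d2 -> \bar R) : \bar R :=
  intRn (fun xi : d1.-tuple R => intRn (fun eta : (d2.-1).-tuple R => f (xi, eta))).

Definition nullF (d1 d2 : nat) (A : set (freq d1 d2)) : Prop :=
  intF (fun p => ((\1_A p : R))%:E) = 0%E.

(* omega = sqrt(|xi|^2 - |eta'|^2) (used on |eta'| <= |xi|),
   lambda = sqrt(|eta'|^2 - |xi|^2) (used on |xi| <= |eta'|) *)
Definition omega d1 d2 (p : freq d1 d2) : R :=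
  Num.sqrt (enorm p.1 ^+ 2 - enorm p.2 ^+ 2).
Definition lambda d1 d2 (p : freq d1 d2) : R :=
  Num.sqrt (enorm p.2 ^+ 2 - enorm p.1 ^+ 2).

(* sin(w y)/w and sinh(w y)/w, extended continuously by y at w = 0 *)
Definition sin_over (w y : R) : R := if w == 0 then y else sin (w * y) / w.
Definition sinh (x : R) : R := (expR x - expR (- x)) / 2.
Definition cosh (x : R) : R := (expR x + expR (- x)) / 2.
Definition sinh_over (w y : R) : R := if w == 0 then y else sinh (w * y) / w.

(* Elements of X, represented on the Fourier side: pairs (v0^, v1^) of
   complex-valued functions of (xi, eta'). *)
Definition pairF d1 d2 := (freq d1 d2 -> R[i] * R[i])%type.

Definition cabs2 (z : R[i]) : R := complex.Re z ^+ 2 + complex.Im z ^+ 2.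

Definition rc (x : R) : R[i] := real_complex R x.

Definition Phi d1 d2 (y1 : R) (v : pairF d1 d2) : pairF d1 d2 :=
  fun p =>
    let a0 := (v p).1 in let a1 := (v p).2 in
    if enorm p.2 <= enorm p.1 then
      let w := omega p in
      (rc (cos (w * y1)) * a0 + rc (sin_over w y1) * a1,
       rc (- w * sin (w * y1)) * a0 + rc (cos (w * y1)) * a1)
    else
      let l := lambda p in
      (rc (cosh (l * y1)) * a0 + rc (sinh_over l y1) * a1,
       rc (l * sinh (l * y1)) * a0 + rc (cosh (l * y1)) * a1).

Definition subF d1 d2 (u v : pairF d1 d2) : pairF d1 d2 :=
  fun p => ((u p).1 - (v p).1, (u p).2 - (v p).2).

Definition Xnorm2 d1 d2 (v : pairF d1 d2) : \bar R :=
  (intF (fun p => if (enorm p.2 < enorm p.1)%R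
                  then (omega p ^+ 2 * cabs2 (v p).1)%R%:E else 0%E)
 + intF (fun p => if (enorm p.1 <= enorm p.2)%R
                  then (lambda p ^+ 2 * cabs2 (v p).1)%R%:E else 0%E)
 + intF (fun p => (cabs2 (v p).2)%:E))%E.

Definition measF d1 d2 (v : pairF d1 d2) : Prop :=
  [/\ measurable_fun [set: freq d1 d2] (fun p => complex.Re (v p).1),
      measurable_fun [set: freq d1 d2] (fun p => complex.Im (v p).1),
      measurable_fun [set: freq d1 d2] (fun p => complex.Re (v p).2) &
      measurable_fun [set: freq d1 d2] (fun p => complex.Im (v p).2)].

Definition inX d1 d2 (v : pairF d1 d2) : Prop := measF v /\ (Xnorm2 v < +oo)%E.

Definition inXS d1 d2 (v : pairF d1 d2) : Prop :=
  inX v /\ nullF [set p | enorm p.1 < enorm p.2 /\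
                          (v p).1 + (v p).2 / rc (lambda p) != 0].
Definition inXU d1 d2 (v : pairF d1 d2) : Prop :=
  inX v /\ nullF [set p | enorm p.1 < enorm p.2 /\
                          (v p).1 - (v p).2 / rc (lambda p) != 0].
Definition inXC d1 d2 (v : pairF d1 d2) : Prop :=
  inX v /\ nullF [set p | enorm p.1 < enorm p.2 /\ v p != (0, 0)].

End Defs.

(* Main.v *)
Require Import Defs.
From HB Require Import structures.
From mathcomp Require Import all_boot all_order all_algebra.
From mathcomp Require Import all_classical all_reals all_analysis.
From mathcomp Require Import complex.
From mathcomp Require Import measurable_realfun lebesgue_integral_fubini.
Import Order.TTheory GRing.Theory Num.Theory.
Import numFieldNormedType.Exports.
Local Open Scope ring_scope.
Set Warnings "-notation-overridden,-ambiguous-paths,-notation-incompatible-prefix".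
From mathcomp Require Import ring lra.
Section Int.
Variable R : realType.
Local Open Scope ereal_scope.

Lemma intRn_ge0 n (f : n.-tuple R -> \bar R) : (forall v, 0 <= f v) -> 0 <= intRn f.
Proof.
elim: n f => [|n IH] f f0 /=; first exact: f0.
by apply: integral_ge0 => t _; apply: IH.
Qed.
Arguments intRn_ge0 {n}.


Lemma mR_id : measurable_fun [set: measurableTypeR R] (fun x : measurableTypeR R => (x : R)).
Proof. by move=> _ A mA; rewrite setTI. Qed.

Lemma meas_intRn n : forall d (X : measurableType d) (f : X * n.-tuple R -> \bar R),
  measurable_fun setT f -> (forall z, 0 <= f z) ->
  measurable_fun setT (fun x => intRn (fun v => f (x, v))).
Proof.
elim: n => [|n IH] d X f mf f0 /=.
  exact: measurable_fun_pair1.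
pose g (z : (X * measurableTypeR R) * n.-tuple R) := f (z.1.1, [tuple of z.1.2 :: z.2]).
have mg : measurable_fun setT g.
  apply: measurableT_comp; first exact: mf.
  apply: measurable_fun_pair.
    by apply: measurableT_comp => //; apply: measurableT_comp.
  apply: measurable_cons.
    exact: (measurableT_comp mR_id (measurableT_comp measurable_snd measurable_fst)).
  exact: measurable_snd.
have := IH _ _ g mg (fun z => f0 _).
move=> mh.
have H := (measurable_fun_fubini_tonelli_F (m2:=lebesgue_measure) _ mh
  (fun z => intRn_ge0 _ (fun v => f0 _))).
rewrite /fubini_F /= in H. exact H.
Qed.
Arguments meas_intRn {n}.


Lemma sec_meas n (f : (n.+1).-tuple R -> \bar R) (t : R) : measurable_fun setT f ->
  measurable_fun setT (fun v : n.-tuple R => f [tuple of t :: v]).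
Proof.
move=> mf; apply: (measurableT_comp mf).
exact: measurable_cons.
Qed.
Arguments sec_meas {n}.


Lemma secint_meas n (f : (n.+1).-tuple R -> \bar R) : measurable_fun setT f ->
  (forall v, 0 <= f v) ->
  measurable_fun [set: measurableTypeR R]
    (fun t : measurableTypeR R => intRn (fun v : n.-tuple R => f [tuple of (t : R) :: v])).
Proof.
move=> mf f0.
pose g (z : measurableTypeR R * n.-tuple R) := f [tuple of (z.1 : R) :: z.2].
have mg : measurable_fun setT g.
  apply: (measurableT_comp mf); apply: measurable_cons.
    exact: (measurableT_comp mR_id measurable_fst).
  exact: measurable_snd.
exact: (@meas_intRn n _ _ g mg (fun z => f0 _)).
Qed.
Arguments secint_meas {n}.


Lemma intRnD n (f g : n.-tuple R -> \bar R) :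
  measurable_fun setT f -> measurable_fun setT g ->
  (forall v, 0 <= f v) -> (forall v, 0 <= g v) ->
  intRn (fun v => f v + g v) = intRn f + intRn g.
Proof.
elim: n f g => [|n IH] f g mf mg f0 g0 //=.
transitivity (\int[lebesgue_measure]_(t in [set: R])
   (intRn (fun v : n.-tuple R => f [tuple of t :: v]) +
    intRn (fun v : n.-tuple R => g [tuple of t :: v]))).
  apply: eq_integral => t _; apply: IH => //; exact: sec_meas.
apply: ge0_integralD => //.
- by move=> t _; apply: intRn_ge0.
- exact: secint_meas.
- by move=> t _; apply: intRn_ge0.
- exact: secint_meas.
Qed.
Arguments intRnD {n}.


Lemma intRn_le n (f g : n.-tuple R -> \bar R) :
  measurable_fun setT f -> measurable_fun setT g ->
  (forall v, 0 <= f v) -> (forall v, f v <= g v) ->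
  intRn f <= intRn g.
Proof.
elim: n f g => [|n IH] f g mf mg f0 fg //=.
apply: ge0_le_integral => //.
- by move=> t _; apply: intRn_ge0.
- exact: secint_meas.
- apply: secint_meas => // v; exact: le_trans (f0 v) (fg v).
- by move=> t _; apply: IH => //; exact: sec_meas.
Qed.
Arguments intRn_le {n}.


Lemma intRn_eq0 n (h g : n.-tuple R -> \bar R) :
  measurable_fun setT h -> measurable_fun setT g ->
  (forall v, 0 <= h v) -> (forall v, 0 <= g v) ->
  intRn h = 0 -> (forall v, h v = 0 -> g v = 0) -> intRn g = 0.
Proof.
elim: n h g => [|n IH] h g mh mg h0 g0 //=.
- by move=> H0 /(_ _ H0).
move=> Hint hg.
have mH := secint_meas _ mh h0.
have mG := secint_meas _ mg g0.
have : ae_eq lebesgue_measure setT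
    (fun t : measurableTypeR R => intRn (fun v : n.-tuple R => h [tuple of (t : R) :: v])) (cst 0).
  apply/ae_eq_integral_abs => //.
  rewrite -[RHS]Hint; apply: eq_integral => t _.
  by rewrite gee0_abs //; apply: intRn_ge0.
move=> Hae.
rewrite (ae_eq_integral (cst 0)) //; last first.
  apply: filterS Hae => t Ht Dt.
  apply: (IH (fun v => h [tuple of (t:R) :: v])) => //.
  - exact: sec_meas.
  - exact: sec_meas.
  - by rewrite /= Ht.
  - by move=> v /hg.
by rewrite integral0.
Qed.
Arguments intRn_eq0 {n}.


Section F.
Variables d1 d2 : nat.
Implicit Types f g h : freq R d1 d2 -> \bar R.
Local Notation mF f := (measurable_fun [set: freq R d1 d2] f).

Lemma inner_meas f : mF f -> (forall p, 0 <= f p) ->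
  measurable_fun setT (fun xi : d1.-tuple R => intRn (fun eta : (d2.-1).-tuple R => f (xi, eta))).
Proof. by move=> mf f0; exact: (@meas_intRn _ _ _ f mf f0). Qed.

Lemma sec2_meas f (xi : d1.-tuple R) : mF f ->
  measurable_fun setT (fun eta : (d2.-1).-tuple R => f (xi, eta)).
Proof. by move=> mf; exact: measurable_fun_pair2. Qed.

Lemma intF_ge0 f : (forall p, 0 <= f p) -> 0 <= intF f.
Proof. by move=> f0; apply: intRn_ge0 => xi; apply: intRn_ge0. Qed.

Lemma intFD f g : mF f -> mF g -> (forall p, 0 <= f p) -> (forall p, 0 <= g p) ->
  intF (fun p => f p + g p) = intF f + intF g.
Proof.
move=> mf mg f0 g0; rewrite /intF.
rewrite -intRnD; last 4 first.
- exact: inner_meas.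
- exact: inner_meas.
- by move=> xi; apply: intRn_ge0.
- by move=> xi; apply: intRn_ge0.
congr intRn; apply/funext => xi; apply: intRnD => //; exact: sec2_meas.
Qed.

Lemma intF_le f g : mF f -> mF g -> (forall p, 0 <= f p) -> (forall p, f p <= g p) ->
  intF f <= intF g.
Proof.
move=> mf mg f0 fg; apply: intRn_le.
- exact: inner_meas.
- apply: inner_meas => // p; exact: le_trans (f0 p) (fg p).
- by move=> xi; apply: intRn_ge0.
- by move=> xi; apply: intRn_le => //; exact: sec2_meas.
Qed.

Lemma intF_eq0 h g : mF h -> mF g -> (forall p, 0 <= h p) -> (forall p, 0 <= g p) ->
  intF h = 0 -> (forall p, h p = 0 -> g p = 0) -> intF g = 0.
Proof.
move=> mh mg h0 g0 H hg; apply: (intRn_eq0 _ _ _ _ _ _ H).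
- exact: inner_meas.
- exact: inner_meas.
- by move=> xi; apply: intRn_ge0.
- by move=> xi; apply: intRn_ge0.
move=> xi Hxi; apply: (intRn_eq0 _ _ _ _ _ _ Hxi) => //.
- exact: sec2_meas.
- exact: sec2_meas.
- by move=> eta; apply: hg.
Qed.
End F.
End Int.
Section Meas.
Variable R : realType.
Variables d1 d2 : nat.
Local Notation F := (freq R d1 d2).
Local Notation mF f := (measurable_fun [set: F] f).

Lemma mcomp (g : R -> R) (f : F -> R) : continuous g -> mF f -> mF (fun p => g (f p)).
Proof. by move=> cg mf; exact: (measurableT_comp (continuous_measurable_fun cg) mf). Qed.

Lemma minv (f : F -> R) : mF f -> mF (fun p => (f p)^-1).
Proof.
move=> mf; apply: (measurableT_comp _ mf).
rewrite -(setUv [set (0:R)]); apply/measurable_funU => //.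
  exact: measurableC.
split; first exact: measurable_fun_set1.
apply: open_continuous_measurable_fun.
  by rewrite openC; exact: (accessible_closed_set1 (hausdorff_accessible (@Rhausdorff R))).
by move=> x; rewrite inE /= => /eqP x0; exact: inv_continuous.
Qed.

Lemma mtnth n : measurable_fun [set: n.-tuple R] (fun v => \sum_(i < n) tnth v i ^+ 2).
Proof.
apply: measurable_sum => i; apply: measurable_funX; exact: measurable_tnth.
Qed.

Lemma menorm1 : mF (fun p => enorm p.1).
Proof.
apply: mcomp; first exact: sqrt_continuous.
exact: (measurableT_comp (mtnth _) measurable_fst).
Qed.

Lemma menorm2 : mF (fun p => enorm p.2).
Proof.
apply: mcomp; first exact: sqrt_continuous.
exact: (measurableT_comp (mtnth _) measurable_snd).
Qed.

Lemma momega : mF (fun p => omega p).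
Proof.
apply: mcomp; first exact: sqrt_continuous.
apply: measurable_funB; apply: measurable_funX; [exact: menorm1|exact: menorm2].
Qed.

Lemma mlambda : mF (fun p => lambda p).
Proof.
apply: mcomp; first exact: sqrt_continuous.
apply: measurable_funB; apply: measurable_funX; [exact: menorm2|exact: menorm1].
Qed.

Lemma ReM (c : R) (z : R[i]) : complex.Re (rc c * z) = c * complex.Re z.
Proof. by case: z => a b /=; rewrite mul0r subr0. Qed.
Lemma ImM (c : R) (z : R[i]) : complex.Im (rc c * z) = c * complex.Im z.
Proof. by case: z => a b /=; rewrite mul0r addr0. Qed.
Lemma ReD (z1 z2 : R[i]) : complex.Re (z1 + z2) = complex.Re z1 + complex.Re z2.
Proof. by case: z1; case: z2. Qed.
Lemma ImD (z1 z2 : R[i]) : complex.Im (z1 + z2) = complex.Im z1 + complex.Im z2.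
Proof. by case: z1; case: z2. Qed.
Lemma ReB (z1 z2 : R[i]) : complex.Re (z1 - z2) = complex.Re z1 - complex.Re z2.
Proof. by case: z1; case: z2. Qed.
Lemma ImB (z1 z2 : R[i]) : complex.Im (z1 - z2) = complex.Im z1 - complex.Im z2.
Proof. by case: z1; case: z2. Qed.
Lemma divrc (z : R[i]) (l : R) : z / rc l = rc (l^-1) * z.
Proof. by rewrite /rc fmorphV mulrC. Qed.
Lemma zneq (z : R[i]) : z != 0 <-> (complex.Re z != 0) \/ (complex.Im z != 0).
Proof.
case: z => a b /=; split.
  move=> H; case: (eqVneq a 0) => [a0|]; last by left.
  case: (eqVneq b 0) => [b0|]; last by right.
  by move: H; rewrite a0 b0 eqxx.
case=> H; apply/negP => /eqP [] => ha hb; by rewrite ?ha ?hb eqxx in H.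
Qed.

Lemma mlin (a b : F -> R) (w : pairF R d1 d2) (sel : R[i] * R[i] -> R[i]) :
  mF a -> mF b -> measF w ->
  (forall c z, complex.Re (sel (rc c * z.1 + rc c * z.2, 0)) = 0) -> True.
Proof. by []. Qed.

Lemma mlinRe (a b : F -> R) (w : pairF R d1 d2) : mF a -> mF b -> measF w ->
  mF (fun p => complex.Re (rc (a p) * (w p).1 + rc (b p) * (w p).2)).
Proof.
move=> ma mb [h1 h2 h3 h4].
under eq_fun do rewrite ReD !ReM.
by apply: measurable_funD; apply: measurable_funM.
Qed.

Lemma mlinIm (a b : F -> R) (w : pairF R d1 d2) : mF a -> mF b -> measF w ->
  mF (fun p => complex.Im (rc (a p) * (w p).1 + rc (b p) * (w p).2)).
Proof.
move=> ma mb [h1 h2 h3 h4].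
under eq_fun do rewrite ImD !ImM.
by apply: measurable_funD; apply: measurable_funM.
Qed.

Lemma measF_sub (u v : pairF R d1 d2) : measF u -> measF v -> measF (subF u v).
Proof.
move=> [u1 u2 u3 u4] [v1 v2 v3 v4]; rewrite /subF; split => /=.
- by under eq_fun do rewrite ReB; exact: measurable_funB.
- by under eq_fun do rewrite ImB; exact: measurable_funB.
- by under eq_fun do rewrite ReB; exact: measurable_funB.
- by under eq_fun do rewrite ImB; exact: measurable_funB.
Qed.

Lemma msinh (f : F -> R) : mF f -> mF (fun p => sinh (f p)).
Proof.
move=> mf; rewrite /sinh; apply: measurable_funM => //.
apply: measurable_funB; apply: mcomp => //; try exact: continuous_expR.
exact: measurable_funN.
Qed.

Lemma mcosh (f : F -> R) : mF f -> mF (fun p => cosh (f p)).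
Proof.
move=> mf; rewrite /cosh; apply: measurable_funM => //.
apply: measurable_funD; apply: mcomp => //; try exact: continuous_expR.
exact: measurable_funN.
Qed.

Lemma msin_over (f : F -> R) (y : R) : mF f -> mF (fun p => sin_over (f p) y).
Proof.
move=> mf; rewrite /sin_over; apply: measurable_fun_ifT => //.
- exact: measurable_fun_eqr.
- apply: measurable_funM; last exact: minv.
  apply: mcomp; first exact: continuous_sin.
  exact: measurable_funM.
Qed.

Lemma msinh_over (f : F -> R) (y : R) : mF f -> mF (fun p => sinh_over (f p) y).
Proof.
move=> mf; rewrite /sinh_over; apply: measurable_fun_ifT => //.
- exact: measurable_fun_eqr.
- apply: measurable_funM; last exact: minv.
  apply: msinh; exact: measurable_funM.
Qed.

Lemma mle : mF (fun p : F => enorm p.2 <= enorm p.1).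
Proof. apply: measurable_fun_ler; [exact: menorm2|exact: menorm1]. Qed.

Lemma measF_Phi (y : R) (w : pairF R d1 d2) : measF w -> measF (Phi y w).
Proof.
move=> mw.
have mco : mF (fun p => cos (omega p * y)).
  by apply: mcomp; [exact: continuous_cos|apply: measurable_funM => //; exact: momega].
have mso : mF (fun p => sin_over (omega p) y) by apply: msin_over; exact: momega.
have mmo : mF (fun p => - omega p * sin (omega p * y)).
  apply: measurable_funM; first by apply: measurable_funN; exact: momega.
  by apply: mcomp; [exact: continuous_sin|apply: measurable_funM => //; exact: momega].
have mch : mF (fun p => cosh (lambda p * y)).
  by apply: mcosh; apply: measurable_funM => //; exact: mlambda.
have msh : mF (fun p => sinh_over (lambda p) y) by apply: msinh_over; exact: mlambda.
have mml : mF (fun p => lambda p * sinh (lambda p * y)).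
  apply: measurable_funM; first exact: mlambda.
  by apply: msinh; apply: measurable_funM => //; exact: mlambda.
rewrite /Phi; split.
- under eq_fun do rewrite (fun_if (fun q => complex.Re q.1)) /=.
  apply: measurable_fun_ifT; first exact: mle.
  + exact: mlinRe.
  + exact: mlinRe.
- under eq_fun do rewrite (fun_if (fun q => complex.Im q.1)) /=.
  apply: measurable_fun_ifT; first exact: mle.
  + exact: mlinIm.
  + exact: mlinIm.
- under eq_fun do rewrite (fun_if (fun q => complex.Re q.2)) /=.
  apply: measurable_fun_ifT; first exact: mle.
  + exact: mlinRe.
  + exact: mlinRe.
- under eq_fun do rewrite (fun_if (fun q => complex.Im q.2)) /=.
  apply: measurable_fun_ifT; first exact: mle.
  + exact: mlinIm.
  + exact: mlinIm.
Qed.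

Definition Nr (w : pairF R d1 d2) (p : F) : R :=
  (if enorm p.2 < enorm p.1 then omega p ^+ 2 * cabs2 (w p).1 else 0) +
  (if enorm p.1 <= enorm p.2 then lambda p ^+ 2 * cabs2 (w p).1 else 0) +
  cabs2 (w p).2.

Lemma cabs2_ge0 (z : R[i]) : 0 <= cabs2 z.
Proof. by rewrite /cabs2 addr_ge0 // sqr_ge0. Qed.

Lemma Nr_ge0 w p : 0 <= Nr w p.
Proof.
rewrite /Nr; apply: addr_ge0; last exact: cabs2_ge0.
apply: addr_ge0; case: ifP => // _; apply: mulr_ge0; rewrite ?sqr_ge0 ?cabs2_ge0 //.
Qed.

Lemma mNr w : measF w -> mF (Nr w).
Proof.
move=> [h1 h2 h3 h4]; rewrite /Nr /cabs2.
have m1 : mF (fun p => complex.Re (w p).1 ^+ 2 + complex.Im (w p).1 ^+ 2).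
  by apply: measurable_funD; apply: measurable_funX.
apply: measurable_funD; last by apply: measurable_funD; apply: measurable_funX.
apply: measurable_funD; apply: measurable_fun_ifT => //.
- apply: measurable_fun_ltr; [exact: menorm2|exact: menorm1].
- by apply: measurable_funM => //; apply: measurable_funX; exact: momega.
- apply: measurable_fun_ler; [exact: menorm1|exact: menorm2].
- by apply: measurable_funM => //; apply: measurable_funX; exact: mlambda.
Qed.

Local Open Scope ereal_scope.

Lemma XnormE w : measF w -> Xnorm2 w = intF (fun p => (Nr w p)%:E).
Proof.
move=> mw; have [h1 h2 h3 h4] := mw.
have mc1 : mF (fun p => (complex.Re (w p).1 ^+ 2 + complex.Im (w p).1 ^+ 2)%R).
  by apply: measurable_funD; apply: measurable_funX.
set A1 := fun p => if (enorm p.2 < enorm p.1)%R then (omega p ^+ 2 * cabs2 (w p).1)%R else 0%R.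
set A2 := fun p => if (enorm p.1 <= enorm p.2)%R then (lambda p ^+ 2 * cabs2 (w p).1)%R else 0%R.
have mA1 : mF A1.
  apply: measurable_fun_ifT => //.
  - apply: measurable_fun_ltr; [exact: menorm2|exact: menorm1].
  - by apply: measurable_funM => //; apply: measurable_funX; exact: momega.
have mA2 : mF A2.
  apply: measurable_fun_ifT => //.
  - apply: measurable_fun_ler; [exact: menorm1|exact: menorm2].
  - by apply: measurable_funM => //; apply: measurable_funX; exact: mlambda.
have mA3 : mF (fun p => cabs2 (w p).2) by apply: measurable_funD; apply: measurable_funX.
have A10 p : (0 <= A1 p)%R.
  by rewrite /A1; case: ifP => // _; apply: mulr_ge0; rewrite ?sqr_ge0 ?cabs2_ge0.
have A20 p : (0 <= A2 p)%R.
  by rewrite /A2; case: ifP => // _; apply: mulr_ge0; rewrite ?sqr_ge0 ?cabs2_ge0.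
rewrite /Xnorm2.
have -> : (fun p => if (enorm p.2 < enorm p.1)%R then (omega p ^+ 2 * cabs2 (w p).1)%:E else 0)
   = (fun p => (A1 p)%:E) by apply/funext => p; rewrite /A1; case: ifP.
have -> : (fun p => if (enorm p.1 <= enorm p.2)%R then (lambda p ^+ 2 * cabs2 (w p).1)%:E else 0)
   = (fun p => (A2 p)%:E) by apply/funext => p; rewrite /A2; case: ifP.
rewrite -intFD; last 4 first.
- exact/measurable_EFinP.
- exact/measurable_EFinP.
- by move=> p; rewrite lee_fin.
- by move=> p; rewrite lee_fin.
rewrite -intFD; last 4 first.
- apply: emeasurable_funD; exact/measurable_EFinP.
- exact/measurable_EFinP.
- by move=> p; rewrite adde_ge0 // lee_fin.
- by move=> p; rewrite lee_fin cabs2_ge0.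
by congr intF; apply/funext => p; rewrite /Nr -!EFinD.
Qed.

Lemma indic01 (A : set F) p : (0 <= (\1_A p : R))%R.
Proof. by rewrite indicE; case: (p \in A). Qed.

Lemma null_term (A : set F) w : measurable A -> nullF A -> measF w ->
  intF (fun p => ((\1_A p : R) * Nr w p)%:E) = 0.
Proof.
move=> mA nA mw.
have mh : mF (fun p => ((\1_A p : R))%:E).
  apply/measurable_EFinP; exact: measurable_indic.
have mg : mF (fun p => ((\1_A p : R) * Nr w p)%:E).
  apply/measurable_EFinP; apply: measurable_funM; [exact: measurable_indic|exact: mNr].
have h0 : forall p, 0 <= ((\1_A p : R))%:E.
  by move=> p; rewrite lee_fin; exact: indic01.
have g0 : forall p, 0 <= ((\1_A p : R) * Nr w p)%:E.
  by move=> p; rewrite lee_fin mulr_ge0 ?Nr_ge0 //; exact: indic01.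
apply: (@intF_eq0 R d1 d2 _ _ mh mg h0 g0 nA).
by move=> p [] ->; rewrite mul0r.
Qed.

Lemma key (w w' : pairF R d1 d2) (A B : set F) : measF w -> measF w' ->
  measurable A -> measurable B -> nullF A -> nullF B ->
  (forall p, ~ A p -> ~ B p -> (Nr w' p <= Nr w p)%R) -> Xnorm2 w' <= Xnorm2 w.
Proof.
move=> mw mw' mA mB nA nB H.
rewrite (XnormE _ mw) (XnormE _ mw').
have mN := mNr _ mw; have mN' := mNr _ mw'.
have mIA : mF (fun p => (\1_A p : R) * Nr w' p)%R.
  by apply: measurable_funM => //; exact: measurable_indic.
have mIB : mF (fun p => (\1_B p : R) * Nr w' p)%R.
  by apply: measurable_funM => //; exact: measurable_indic.
pose G := fun p => (Nr w p + (\1_A p : R) * Nr w' p + (\1_B p : R) * Nr w' p)%R.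
have mG : mF G by apply: measurable_funD => //; apply: measurable_funD.
apply: (@le_trans _ _ (intF (fun p => (G p)%:E))).
  apply: intF_le.
  - exact/measurable_EFinP.
  - exact/measurable_EFinP.
  - by move=> p; rewrite lee_fin Nr_ge0.
  move=> p; rewrite lee_fin /G.
  have h1 := indic01 A p; have h2 := indic01 B p.
  have n0 := Nr_ge0 w p; have n0' := Nr_ge0 w' p.
  case: (pselect (A p)) => Ap.
    have -> : ((\1_A p : R) * Nr w' p = Nr w' p)%R by rewrite indicE mem_set // mul1r.
    have : (0 <= (\1_B p : R) * Nr w' p)%R by rewrite mulr_ge0.
    lra.
  case: (pselect (B p)) => Bp.
    have -> : ((\1_B p : R) * Nr w' p = Nr w' p)%R by rewrite indicE mem_set // mul1r.
    have : (0 <= (\1_A p : R) * Nr w' p)%R by rewrite mulr_ge0.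
    lra.
  have -> : ((\1_A p : R) * Nr w' p = 0)%R by rewrite indicE memNset // mul0r.
  have -> : ((\1_B p : R) * Nr w' p = 0)%R by rewrite indicE memNset // mul0r.
  have := H p Ap Bp; lra.
rewrite /G.
under [X in intF X]eq_fun do rewrite !EFinD.
rewrite intFD; last 4 first.
- apply: emeasurable_funD; exact/measurable_EFinP.
- exact/measurable_EFinP.
- by move=> p; rewrite adde_ge0 // lee_fin ?Nr_ge0 // mulr_ge0 ?indic01 ?Nr_ge0.
- by move=> p; rewrite lee_fin mulr_ge0 ?indic01 ?Nr_ge0.
rewrite intFD; last 4 first.
- exact/measurable_EFinP.
- exact/measurable_EFinP.
- by move=> p; rewrite lee_fin ?Nr_ge0.
- by move=> p; rewrite lee_fin mulr_ge0 ?indic01 ?Nr_ge0.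
by rewrite !null_term // !adde0.
Qed.

Local Close Scope ereal_scope.
Local Open Scope classical_set_scope.
Lemma mset_bool (b : F -> bool) : mF b -> measurable [set p | b p].
Proof.
move=> mb; have := mb measurableT [set true] I; rewrite setTI.
by congr measurable; apply/seteqP; split => p /=.
Qed.

Lemma mset_neq (f : F -> R) : mF f -> measurable [set p | f p != 0].
Proof.
move=> mf; rewrite (_ : [set p | f p != 0] = ~` [set p | f p == 0]).
  by apply: measurableC; apply: mset_bool; exact: measurable_fun_eqr.
by apply/seteqP; split => p /=; [move/negP|move=> H; apply/negP].
Qed.

Lemma mset_z (z : F -> R[i]) : mF (fun p => complex.Re (z p)) -> mF (fun p => complex.Im (z p)) ->
  measurable [set p | enorm p.1 < enorm p.2 /\ z p != 0].
Proof.
move=> mr mi.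
rewrite (_ : [set p | _] = [set p | enorm p.1 < enorm p.2] `&`
   ([set p | complex.Re (z p) != 0] `|` [set p | complex.Im (z p) != 0])).
  apply: measurableI.
    by apply: mset_bool; apply: measurable_fun_ltr; [exact: menorm1|exact: menorm2].
  by apply: measurableU; apply: mset_neq.
by apply/seteqP; split => p /= [h1 h2]; split => //; apply/zneq.
Qed.

Lemma msetS (w : pairF R d1 d2) : measF w ->
  measurable [set p | enorm p.1 < enorm p.2 /\ (w p).1 + (w p).2 / rc (lambda p) != 0].
Proof.
move=> [h1 h2 h3 h4]; apply: mset_z.
  under eq_fun do rewrite divrc ReD ReM.
  apply: measurable_funD => //; apply: measurable_funM => //; apply: minv; exact: mlambda.
under eq_fun do rewrite divrc ImD ImM.
apply: measurable_funD => //; apply: measurable_funM => //; apply: minv; exact: mlambda.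
Qed.

Lemma msetU (w : pairF R d1 d2) : measF w ->
  measurable [set p | enorm p.1 < enorm p.2 /\ (w p).1 - (w p).2 / rc (lambda p) != 0].
Proof.
move=> [h1 h2 h3 h4]; apply: mset_z.
  under eq_fun do rewrite divrc ReB ReM.
  apply: measurable_funB => //; apply: measurable_funM => //; apply: minv; exact: mlambda.
under eq_fun do rewrite divrc ImB ImM.
apply: measurable_funB => //; apply: measurable_funM => //; apply: minv; exact: mlambda.
Qed.

Lemma msetC (w : pairF R d1 d2) : measF w ->
  measurable [set p | enorm p.1 < enorm p.2 /\ w p != (0, 0)].
Proof.
move=> [h1 h2 h3 h4].
rewrite (_ : [set p | _] = [set p | enorm p.1 < enorm p.2 /\ (w p).1 != 0] `|`
   [set p | enorm p.1 < enorm p.2 /\ (w p).2 != 0]).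
  by apply: measurableU; apply: mset_z.
apply/seteqP; split => p /=.
  move=> [h]; case: (w p) => a b /=; rewrite xpair_eqE negb_and => /orP [] H.
    by left.
  by right.
case => [] [h H]; split => //; case: (w p) H => a b /= H; rewrite xpair_eqE negb_and H ?orbT //.
Qed.
End Meas.
Arguments Nr {R d1 d2}.
Section Pt.
Variable R : realType.
Variables d1 d2 : nat.
Local Notation F := (freq R d1 d2).

Lemma PhiB (y : R) (u v : pairF R d1 d2) :
  subF (Phi y u) (Phi y v) = Phi y (subF u v).
Proof.
apply/funext => p; rewrite /subF /Phi; case: ifP => _ /=; congr pair; ring.
Qed.

Lemma cabs2_lin (a b : R) (z1 z2 : R[i]) : cabs2 (rc a * z1 + rc b * z2) =
  (a * complex.Re z1 + b * complex.Re z2) ^+ 2 + (a * complex.Im z1 + b * complex.Im z2) ^+ 2.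
Proof. by rewrite /cabs2 ReD ImD !ReM !ImM. Qed.

Lemma enorm_ge0 n (v : n.-tuple R) : 0 <= enorm v.
Proof. exact: sqrtr_ge0. Qed.

Lemma Nr_osc (y : R) (w : pairF R d1 d2) p : enorm p.2 < enorm p.1 ->
  Nr (Phi y w) p = Nr w p.
Proof.
move=> h.
have e2 := @enorm_ge0 _ p.2.
have om0 : omega p != 0.
  have hp : 0 < enorm p.1 ^+ 2 - enorm p.2 ^+ 2 by nra.
  by rewrite /omega gt_eqF // sqrtr_gt0.
rewrite /Nr /Phi (ltW h) h (leNgt (enorm p.1)) h /= ?addr0.
rewrite /sin_over (negbTE om0).
rewrite -[RHS]mul1r -(cos2Dsin2 (omega p * y)).
rewrite !cabs2_lin /cabs2.
by field.
Qed.

Lemma Nr_bd (y : R) (w : pairF R d1 d2) p : enorm p.1 = enorm p.2 ->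
  Nr (Phi y w) p = Nr w p.
Proof.
move=> h.
have om : omega p = 0 by rewrite /omega h subrr sqrtr0.
have la : lambda p = 0 by rewrite /lambda h subrr sqrtr0.
rewrite /Nr /Phi h lexx ltxx /= om la /sin_over eqxx mul0r cos0.
rewrite !cabs2_lin /cabs2.
ring.
Qed.

Lemma re_rel (l a b : R) : l != 0 -> a + l^-1 * b = 0 -> b = - (l * a).
Proof.
move=> l0 H.
have -> : b = l * (a + l^-1 * b) - l * a by field.
by rewrite H mulr0 sub0r.
Qed.

Lemma Nr_hypS (y : R) (w : pairF R d1 d2) p : 0 <= y -> enorm p.1 < enorm p.2 ->
  (w p).1 + (w p).2 / rc (lambda p) = 0 ->
  Nr (Phi y w) p <= Nr w p.
Proof.
move=> y0 h H.
have e1 := @enorm_ge0 _ p.1.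
have hp : 0 < enorm p.2 ^+ 2 - enorm p.1 ^+ 2 by nra.
have lp : 0 < lambda p by rewrite /lambda sqrtr_gt0.
have l0 : lambda p != 0 by rewrite gt_eqF.
have hRe : complex.Re (w p).2 = - (lambda p * complex.Re (w p).1).
  apply: re_rel => //; have := congr1 (@complex.Re R) H.
  by rewrite divrc ReD ReM.
have hIm : complex.Im (w p).2 = - (lambda p * complex.Im (w p).1).
  apply: re_rel => //; have := congr1 (@complex.Im R) H.
  by rewrite divrc ImD ImM.
rewrite /Nr /Phi (leNgt (enorm p.2)) h (ltNge (enorm p.2)) (ltW h) /=.
rewrite /sinh_over (negbTE l0).
rewrite !cabs2_lin /cabs2 hRe hIm.
set C := cosh (lambda p * y); set S := sinh (lambda p * y).
set X := complex.Re (w p).1; set X' := complex.Im (w p).1.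
set L := lambda p.
have eCS : C - S = expR (- (L * y)) by rewrite /C /S /cosh /sinh; field.
have E1 : expR (- (L * y)) <= 1 by rewrite expR_le1 oppr_le0 mulr_ge0 // ltW.
have E0 : 0 <= expR (- (L * y)) := expR_ge0 _.
set e := expR (- (L * y)) in eCS E1 E0.
have -> : 0 + L ^+ 2 * ((C * X + S / L * - (L * X)) ^+ 2 + (C * X' + S / L * - (L * X')) ^+ 2) +
  ((L * S * X + C * - (L * X)) ^+ 2 + (L * S * X' + C * - (L * X')) ^+ 2)
  = (C - S) ^+ 2 * (2 * L ^+ 2 * (X ^+ 2 + X' ^+ 2)) by field.
have -> : 0 + L ^+ 2 * (X ^+ 2 + X' ^+ 2) + ((- (L * X)) ^+ 2 + (- (L * X')) ^+ 2)
  = 2 * L ^+ 2 * (X ^+ 2 + X' ^+ 2) by ring.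
rewrite eCS.
set Q := 2 * L ^+ 2 * (X ^+ 2 + X' ^+ 2).
have Q0 : 0 <= Q by rewrite /Q mulr_ge0 ?addr_ge0 ?sqr_ge0 // mulr_ge0 ?sqr_ge0.
have e2 : e ^+ 2 <= 1 by nra.
nra.
Qed.

Lemma re_relU (l a b : R) : l != 0 -> a - l^-1 * b = 0 -> b = l * a.
Proof.
move=> l0 H.
have -> : b = l * a - l * (a - l^-1 * b) by field.
by rewrite H mulr0 subr0.
Qed.

Lemma Nr_hypU (y : R) (w : pairF R d1 d2) p : y <= 0 -> enorm p.1 < enorm p.2 ->
  (w p).1 - (w p).2 / rc (lambda p) = 0 ->
  Nr (Phi y w) p <= Nr w p.
Proof.
move=> y0 h H.
have e1 := @enorm_ge0 _ p.1.
have hp : 0 < enorm p.2 ^+ 2 - enorm p.1 ^+ 2 by nra.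
have lp : 0 < lambda p by rewrite /lambda sqrtr_gt0.
have l0 : lambda p != 0 by rewrite gt_eqF.
have hRe : complex.Re (w p).2 = lambda p * complex.Re (w p).1.
  apply: re_relU => //; have := congr1 (@complex.Re R) H.
  by rewrite divrc ReB ReM.
have hIm : complex.Im (w p).2 = lambda p * complex.Im (w p).1.
  apply: re_relU => //; have := congr1 (@complex.Im R) H.
  by rewrite divrc ImB ImM.
rewrite /Nr /Phi (leNgt (enorm p.2)) h (ltNge (enorm p.2)) (ltW h) /=.
rewrite /sinh_over (negbTE l0).
rewrite !cabs2_lin /cabs2 hRe hIm.
set C := cosh (lambda p * y); set S := sinh (lambda p * y).
set X := complex.Re (w p).1; set X' := complex.Im (w p).1.
set L := lambda p.
have eCS : C + S = expR (L * y) by rewrite /C /S /cosh /sinh; field.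
have E1 : expR (L * y) <= 1 by rewrite expR_le1 mulr_ge0_le0 // ltW.
have E0 : 0 <= expR (L * y) := expR_ge0 _.
set e := expR (L * y) in eCS E1 E0.
have -> : 0 + L ^+ 2 * ((C * X + S / L * (L * X)) ^+ 2 + (C * X' + S / L * (L * X')) ^+ 2) +
  ((L * S * X + C * (L * X)) ^+ 2 + (L * S * X' + C * (L * X')) ^+ 2)
  = (C + S) ^+ 2 * (2 * L ^+ 2 * (X ^+ 2 + X' ^+ 2)) by field.
have -> : 0 + L ^+ 2 * (X ^+ 2 + X' ^+ 2) + ((L * X) ^+ 2 + (L * X') ^+ 2)
  = 2 * L ^+ 2 * (X ^+ 2 + X' ^+ 2) by ring.
rewrite eCS.
set Q := 2 * L ^+ 2 * (X ^+ 2 + X' ^+ 2).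
have Q0 : 0 <= Q by rewrite /Q mulr_ge0 ?addr_ge0 ?sqr_ge0 // mulr_ge0 ?sqr_ge0.
have e2 : e ^+ 2 <= 1 by nra.
nra.
Qed.

Lemma Nr_zero (y : R) (w : pairF R d1 d2) p : w p = (0, 0) ->
  Nr (Phi y w) p = Nr w p.
Proof.
move=> hw.
have hP : Phi y w p = (0, 0) by rewrite /Phi hw /=; case: ifP => _; rewrite !mulr0 !addr0.
by rewrite /Nr hP hw.
Qed.

Lemma Nr_S (y : R) (w : pairF R d1 d2) p : 0 <= y ->
  (enorm p.1 < enorm p.2 -> (w p).1 + (w p).2 / rc (lambda p) = 0) ->
  Nr (Phi y w) p <= Nr w p.
Proof.
move=> y0 H; case: (ltgtP (enorm p.1) (enorm p.2)) => h.
- exact: Nr_hypS (H h).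
- by rewrite Nr_osc.
- by rewrite Nr_bd.
Qed.

Lemma Nr_U (y : R) (w : pairF R d1 d2) p : y <= 0 ->
  (enorm p.1 < enorm p.2 -> (w p).1 - (w p).2 / rc (lambda p) = 0) ->
  Nr (Phi y w) p <= Nr w p.
Proof.
move=> y0 H; case: (ltgtP (enorm p.1) (enorm p.2)) => h.
- exact: Nr_hypU (H h).
- by rewrite Nr_osc.
- by rewrite Nr_bd.
Qed.

Lemma Nr_C (y : R) (w : pairF R d1 d2) p :
  (enorm p.1 < enorm p.2 -> w p = (0, 0)) ->
  Nr (Phi y w) p = Nr w p.
Proof.
move=> H; case: (ltgtP (enorm p.1) (enorm p.2)) => h.
- exact: Nr_zero (H h).
- by rewrite Nr_osc.
- by rewrite Nr_bd.
Qed.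
End Pt.
Section Final.
Variable R : realType.
Variables d1 d2 : nat.
Local Notation F := (freq R d1 d2).
Local Open Scope classical_set_scope.

Lemma null_sub (A B : set F) : measurable A -> measurable B -> A `<=` B ->
  nullF B -> nullF A.
Proof.
move=> mA mB AB nB; apply/eqP; rewrite eq_le; apply/andP; split.
  rewrite -nB; apply: intF_le.
  - apply/measurable_EFinP; exact: measurable_indic.
  - apply/measurable_EFinP; exact: measurable_indic.
  - by move=> p; rewrite lee_fin; exact: indic01.
  move=> p; rewrite lee_fin !indicE; case: (boolP (p \in A)) => hA.
    by rewrite (mem_set (AB _ (set_mem hA))).
  by case: (p \in B).
by apply: intF_ge0 => p; rewrite lee_fin; exact: indic01.
Qed.

Lemma notA_eq0 (P : Prop) (z : R[i]) : ~ (P /\ z != 0) -> P -> z = 0.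
Proof.
move=> H hP; apply/eqP; apply/negPn; apply/negP => hz; exact: H.
Qed.

Lemma partS (u v : pairF R d1 d2) : inXS u -> inXS v -> forall y1 : R, 0 <= y1 ->
     (Xnorm2 (subF (Phi y1 u) (Phi y1 v)) <= Xnorm2 (subF u v))%E.
Proof.
move=> [[mu _] nu] [[mv _] nv] y y0.
rewrite PhiB.
have mw := @measF_sub R d1 d2 u v mu mv.
apply: (@key R d1 d2 _ _ _ _ mw (@measF_Phi R d1 d2 y _ mw) (@msetS R d1 d2 u mu) (@msetS R d1 d2 v mv) nu nv).
move=> p hu hv; apply: Nr_S => // h.
have eu := @notA_eq0 _ _ hu h; have ev := @notA_eq0 _ _ hv h.
rewrite /subF /=.
have -> : (u p).1 - (v p).1 + ((u p).2 - (v p).2) / rc (lambda p) =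
  ((u p).1 + (u p).2 / rc (lambda p)) - ((v p).1 + (v p).2 / rc (lambda p)) by ring.
by rewrite eu ev subrr.
Qed.

Lemma partU (u v : pairF R d1 d2) : inXU u -> inXU v -> forall y1 : R, y1 <= 0 ->
     (Xnorm2 (subF (Phi y1 u) (Phi y1 v)) <= Xnorm2 (subF u v))%E.
Proof.
move=> [[mu _] nu] [[mv _] nv] y y0.
rewrite PhiB.
have mw := @measF_sub R d1 d2 u v mu mv.
apply: (@key R d1 d2 _ _ _ _ mw (@measF_Phi R d1 d2 y _ mw) (@msetU R d1 d2 u mu) (@msetU R d1 d2 v mv) nu nv).
move=> p hu hv; apply: Nr_U => // h.
have eu := @notA_eq0 _ _ hu h; have ev := @notA_eq0 _ _ hv h.
rewrite /subF /=.
have -> : (u p).1 - (v p).1 - ((u p).2 - (v p).2) / rc (lambda p) =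
  ((u p).1 - (u p).2 / rc (lambda p)) - ((v p).1 - (v p).2 / rc (lambda p)) by ring.
by rewrite eu ev subrr.
Qed.

Lemma partC3 (u : pairF R d1 d2) : inXC u -> inXS u /\ inXU u.
Proof.
move=> [iu nu]; have mu := iu.1; split; split => //; apply: (null_sub _ _ _ (@msetC R d1 d2 u mu)) => //.
- exact: msetS.
- move=> p /= [h hz]; split => //; apply/negP => /eqP hu.
  by move: hz; rewrite hu /= mul0r addr0 eqxx.
- exact: msetU.
- move=> p /= [h hz]; split => //; apply/negP => /eqP hu.
  by move: hz; rewrite hu /= mul0r subr0 eqxx.
Qed.

Lemma notC_eq0 (P : Prop) (z : R[i] * R[i]) : ~ (P /\ z != (0, 0)) -> P -> z = (0, 0).
Proof.
move=> H hP; apply/eqP; apply/negPn; apply/negP => hz; exact: H.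
Qed.

Lemma partC4 (u v : pairF R d1 d2) : inXC u -> inXC v -> forall y1 : R,
     Xnorm2 (subF (Phi y1 u) (Phi y1 v)) = Xnorm2 (subF u v).
Proof.
move=> [[mu _] nu] [[mv _] nv] y.
rewrite PhiB.
have mw := @measF_sub R d1 d2 u v mu mv.
have mw' := @measF_Phi R d1 d2 y _ mw.
have mA := @msetC R d1 d2 u mu; have mB := @msetC R d1 d2 v mv.
have E : forall p, ~ [set p | enorm p.1 < enorm p.2 /\ u p != (0, 0)] p ->
    ~ [set p | enorm p.1 < enorm p.2 /\ v p != (0, 0)] p ->
    Nr (Phi y (subF u v)) p = Nr (subF u v) p.
  move=> p hu hv; apply: Nr_C => h.
  have eu := @notC_eq0 _ _ hu h; have ev := @notC_eq0 _ _ hv h.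
  by rewrite /subF eu ev /= subrr.
apply/eqP; rewrite eq_le; apply/andP; split.
  apply: (@key R d1 d2 _ _ _ _ mw mw' mA mB nu nv).
  by move=> p hu hv; rewrite E.
apply: (@key R d1 d2 _ _ _ _ mw' mw mA mB nu nv).
by move=> p hu hv; rewrite E.
Qed.
End Final.

Theorem theorem3 (R : realType) (d1 d2 : nat) (hd1 : (1 <= d1)%N) (hd2 : (2 <= d2)%N) :
  (forall u v : pairF R d1 d2, inXS u -> inXS v -> forall y1 : R, 0 <= y1 ->
     (Xnorm2 (subF (Phi y1 u) (Phi y1 v)) <= Xnorm2 (subF u v))%E)
  /\
  (forall u v : pairF R d1 d2, inXU u -> inXU v -> forall y1 : R, y1 <= 0 ->
     (Xnorm2 (subF (Phi y1 u) (Phi y1 v)) <= Xnorm2 (subF u v))%E)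
  /\
  (forall u : pairF R d1 d2, inXC u -> inXS u /\ inXU u)
  /\
  (forall u v : pairF R d1 d2, inXC u -> inXC v -> forall y1 : R,
     Xnorm2 (subF (Phi y1 u) (Phi y1 v)) = Xnorm2 (subF u v)).
Proof.
split; first exact: partS.
split; first exact: partU.
split; first exact: partC3.
exact: partC4.
Qed.
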